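(* Let $(X,\mathcal{A},\mu)$ be a probability space and $f:X\to X$ a measurable map with $f\mu=\mu$. Consider the nonautonomous system with $X_n=X$, $f_n=f$, $\mu_n=\mu$ for all $n$, and let $\mathcal{F}$ be the set of all constant sequences $\mathcal{P}_n\equiv\mathcal{P}$ of finite measurable partitions $\mathcal{P}$ of $X$. Then $h_{\mathcal{E}(\mathcal{F})}(f_{1,\infty})=h_\mu(f)$, where $h_\mu(f)$ is the classical Kolmogorov–Sinai entropy.
   Context: For a sequence $\{\mathcal{P}_n\}$ of finite measurable partitions, $h(f_{1,\infty};\mathcal{P}_{1,\infty})=\limsup_n\frac1nH_{\mu}(\bigvee_{i=0}^{n-1}f^{-i}\mathcal{P}_{i+1})$, $H_\mu(\mathcal{P})=-\sum_P\mu(P)\log\mu(P)$; $h_{\mathcal{E}}(f_{1,\infty})=\sup_{\mathcal{P}_{1,\infty}\in\mathcal{E}}h(f_{1,\infty};\mathcal{P}_{1,\infty})$. An admissible class is a nonempty class $\mathcal{E}$ of sequences of finite measurable partitions such that (A) each member has uniformly bounded cardinalities; (B) it is closed under passing to termwise coarser sequences; (C) $\mathcal{P}_{1,\infty}\in\mathcal{E}$, $m\ge1$ imply $\{\bigvee_{i=0}^{m-1}f_k^{-i}\mathcal{P}_{k+i}\}_{k\ge1}\in\mathcal{E}$ where $f_k^{-i}$ is the preimage under $f_{k+i-1}\circ\cdots\circ f_k$. $\mathcal{E}(\mathcal{F})$ is the smallest admissible class containing $\mathcal{F}$ (the intersection of all admissible classes containing $\mathcal{F}$). *)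

(* Defs.v *)
From HB Require Import structures.
From mathcomp Require Import all_boot all_order all_algebra.
From mathcomp Require Import all_classical all_reals all_analysis.
Set Implicit Arguments. Unset Strict Implicit. Unset Printing Implicit Defensive.
Import Order.TTheory GRing.Theory Num.Theory.
Import numFieldNormedType.Exports.
Local Open Scope classical_set_scope.
Local Open Scope ring_scope.

Section Partitions.
Context {d : measure_display} {T : measurableType d} {R : realType}.

Definition is_fmpart (P : set (set T)) : Prop :=
  [/\ finite_set P,
      (forall A, P A -> measurable A),
      (forall A, P A -> A !=set0),
      (forall A B, P A -> P B -> A `&` B !=set0 -> A = B)
    & \bigcup_(A in P) A = setT].

Definition coarser (Q P : set (set T)) : Prop :=
  forall A, P A -> exists2 B, Q B & A `<=` B.

Definition pjoin (P Q : set (set T)) : set (set T) :=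
  [set C | exists A B, [/\ P A, Q B, C = A `&` B & C !=set0]].

Definition ppre (g : T -> T) (P : set (set T)) : set (set T) :=
  [set C | exists A, [/\ P A, C = g @^-1` A & C !=set0]].

Fixpoint bigjoin (n : nat) (Q : nat -> set (set T)) : set (set T) :=
  match n with
  | 0 => [set setT]
  | m.+1 => pjoin (bigjoin m Q) (Q m)
  end.

Definition pentropy (mu : probability T R) (P : set (set T)) : R :=
  (\sum_(A \in P) (- (fine (mu A) * ln (fine (mu A)))))%R.

(* Sequences of partitions P_{1,oo} are encoded as s : nat -> set (set T),
   with s k standing for P_{k+1}. *)
Definition is_fmpart_seq (s : nat -> set (set T)) : Prop :=
  forall n, is_fmpart (s n).

Definition seq_entropy (mu : probability T R) (f : T -> T)
    (s : nat -> set (set T)) : \bar R :=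
  limn_esup (fun n => ((n%:R)^-1 * pentropy mu
                         (bigjoin n (fun i => ppre (iter i f) (s i))))%:E).

Definition class_entropy (mu : probability T R) (f : T -> T)
    (E : set (nat -> set (set T))) : \bar R :=
  ereal_sup [set seq_entropy mu f s | s in E].

Definition admissible (f : T -> T) (E : set (nat -> set (set T))) : Prop :=
  [/\ E !=set0,
      (forall s, E s -> is_fmpart_seq s),
      (forall s, E s -> exists N : nat, forall n, exists c : seq (set T),
          (size c <= N)%N /\ s n = [set` c]),
      (forall s t, E s -> is_fmpart_seq t -> (forall n, coarser (t n) (s n)) ->
          E t)
    & (* (C) closed under \/_{i=0}^{m-1} f_k^{-i} P_{k+i} *)
      (forall s m, E s -> (1 <= m)%N ->
          E (fun k => bigjoin m (fun i => ppre (iter i f) (s (k + i)%N))))].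

Definition gen_class (f : T -> T) (F : set (nat -> set (set T)))
    : set (nat -> set (set T)) :=
  [set s | forall E, admissible f E -> F `<=` E -> E s].

Definition ks_entropy_part (mu : probability T R) (f : T -> T)
    (P : set (set T)) : \bar R :=
  limn (fun n : nat => ((n%:R)^-1 * pentropy mu
                         (bigjoin n (fun i => ppre (iter i f) P)))%:E).

Definition ks_entropy (mu : probability T R) (f : T -> T) : \bar R :=
  ereal_sup [set ks_entropy_part mu f P | P in is_fmpart].

Definition const_fmpart_seqs : set (nat -> set (set T)) :=
  [set s | exists2 P, is_fmpart P & s = fun _ => P].

End Partitions.

(* Main.v *)
Require Import Defs.
From HB Require Import structures.
From mathcomp Require Import all_boot all_order all_algebra.
From mathcomp Require Import all_classical all_reals all_analysis.
From mathcomp Require Import lra.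
Unset Printing Implicit Defensive.
Import Order.TTheory GRing.Theory Num.Theory.
Import numFieldNormedType.Exports.
Local Open Scope classical_set_scope.
Local Open Scope ring_scope.
Section Real.
Variable R : realType.
Definition phi (x : R) := - (x * ln x).

Lemma phi0 : phi 0 = 0. Proof. by rewrite /phi mul0r oppr0. Qed.

Lemma phi_ge0 x : 0 <= x <= 1 -> 0 <= phi x.
Proof.
move=> /andP[x0 x1]; rewrite /phi oppr_ge0 mulr_ge0_le0 //.
exact: ln_le0.
Qed.

Lemma ln_le_sub1 (y : R) : 0 < y -> ln y <= y - 1.
Proof.
move=> y0; have := @le_ln1Dx _ (y - 1).
rewrite addrCA subrr addr0; apply; lra.
Qed.

Lemma term_ineq (p a b : R) : 0 <= p -> p <= a -> p <= b ->
  p - a * b <= p * ln p - p * ln a - p * ln b.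
Proof.
move=> p0 pa pb; have a0 : 0 <= a by apply: le_trans pa.
have b0 : 0 <= b by apply: le_trans pb.
case: (ltrP 0 p) => [pp|]; last first.
  move=> p0'; have -> : p = 0 by apply/eqP; rewrite eq_le p0' p0.
  rewrite !mul0r !subrr sub0r oppr_le0; exact: mulr_ge0.
have ap : 0 < a := lt_le_trans pp pa.
have bp : 0 < b := lt_le_trans pp pb.
have := ln_le_sub1 (a * b / p) (_ : 0 < a * b / p).
rewrite !divr_gt0 ?mulr_gt0 // => /(_ isT).
rewrite ln_div ?posrE ?mulr_gt0 // lnM ?posrE //.
move=> h; have := ler_wpM2l p0 h.
have -> : p * (a * b / p - 1) = a * b - p.
  by rewrite mulrBr mulr1 mulrCA mulfV ?gt_eqF // mulr1.
rewrite !mulrDr !mulrN; lra.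
Qed.


Lemma le_sum_mem (I : eqType) (r : seq I) (F : I -> R) x :
  x \in r -> (forall i, i \in r -> 0 <= F i) -> F x <= \sum_(i <- r) F i.
Proof.
move=> xr F0; rewrite (big_rem x) //= lerDl big_seq sumr_ge0 // => i /mem_rem.
exact: F0.
Qed.

Lemma sum_phi_le (I : eqType) (r : seq I) (p : I -> R) :
  (forall i, i \in r -> 0 <= p i) ->
  phi (\sum_(i <- r) p i) <= \sum_(i <- r) phi (p i).
Proof.
move=> p0; rewrite /phi mulr_suml -sumrN big_seq [X in _ <= X]big_seq.
apply: ler_sum => i ir; rewrite lerN2.
have [pi0|pip] := eqVneq (p i) 0; first by rewrite pi0 !mul0r.
have pp : 0 < p i by rewrite lt_neqAle eq_sym pip p0.
apply: ler_wpM2l; first exact: ltW.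
rewrite ler_ln ?posrE //; first exact: le_sum_mem.
by apply: lt_le_trans pp (le_sum_mem _ _ _ _ ir _) => j jr; apply: p0.
Qed.

Lemma ent_sub_seq (I J : eqType) (si : seq I) (sj : seq J) (p : I -> J -> R) :
  (forall i j, i \in si -> j \in sj -> 0 <= p i j) ->
  \sum_(i <- si) \sum_(j <- sj) p i j = 1 ->
  \sum_(i <- si) \sum_(j <- sj) phi (p i j) <=
  \sum_(i <- si) phi (\sum_(j <- sj) p i j) +
  \sum_(j <- sj) phi (\sum_(i <- si) p i j).
Proof.
move=> p0 p1.
set a := fun i => \sum_(j <- sj) p i j.
set b := fun j => \sum_(i <- si) p i j.
have key : \sum_(i <- si) \sum_(j <- sj) (p i j - a i * b j) <=
  \sum_(i <- si) \sum_(j <- sj)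
     (p i j * ln (p i j) - p i j * ln (a i) - p i j * ln (b j)).
  rewrite big_seq [X in _ <= X]big_seq; apply: ler_sum => i ir.
  rewrite big_seq [X in _ <= X]big_seq; apply: ler_sum => j jr.
  apply: term_ineq; first exact: p0.
    by apply: le_sum_mem => // j' j'r; apply: p0.
  by apply: (le_sum_mem _ _ (fun i => p i j)) => // i' i'r; apply: p0.
have e0 : \sum_(i <- si) \sum_(j <- sj) (p i j - a i * b j) = 0.
  under eq_bigr do rewrite sumrB -mulr_sumr.
  rewrite sumrB -mulr_suml p1.
  have -> : \sum_(j <- sj) b j = 1 by rewrite /b exchange_big.
  by rewrite mulr1 subrr.
rewrite e0 in key.
have ea : \sum_(i <- si) phi (a i) =
   \sum_(i <- si) \sum_(j <- sj) - (p i j * ln (a i)).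
  by apply: eq_bigr => i _; rewrite /phi /a mulr_suml sumrN.
have eb : \sum_(j <- sj) phi (b j) =
   \sum_(i <- si) \sum_(j <- sj) - (p i j * ln (b j)).
  rewrite exchange_big; apply: eq_bigr => j _.
  by rewrite /phi /b mulr_suml sumrN.
rewrite ea eb -subr_ge0 -big_split -sumrB /=.
move/le_trans: key; apply; rewrite le_eqVlt; apply/orP; left; apply/eqP.
apply: eq_bigr => i _; rewrite -big_split -sumrB /=; apply: eq_bigr => j _.
rewrite /phi; lra.
Qed.

End Real.

Section Fekete.
Variable R : realType.

Lemma subadd_iter (a : nat -> R) (A : forall m n, a (m + n)%N <= a m + a n) q k r :
  a (q * k + r)%N <= q%:R * a k + a r.
Proof.
elim: q => [|q IH]; first by rewrite mul0n add0n mul0r add0r.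
rewrite mulSn -addnA (le_trans (A _ _)) // mulrSr.
rewrite mulrDl mul1r -addrA addrC -addrA lerD2l addrC; exact: IH.
Qed.

Lemma fekete (a : nat -> R) : (forall n, 0 <= a n) ->
  (forall m n, a (m + n)%N <= a m + a n) ->
  cvgn (fun n => (n%:R)^-1 * a n).
Proof.
move=> a0 A.
pose E := [set (n.+1%:R)^-1 * a n.+1 | n in [set: nat]].
have El : has_lbound E.
  by exists 0 => _ [n _ <-]; rewrite mulr_ge0 // invr_ge0.
have Einf : has_inf E by split => //; exists (1%:R^-1 * a 1); exists 0%N.
apply/cvg_ex; exists (inf E); apply/cvgrPdist_le => e e0.
have e20 : 0 < e / 2 by rewrite divr_gt0.
have [_ [k _ <-] yl] := inf_adherent e20 Einf.
pose C := \sum_(i < k.+1) a i.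
near=> n.
have n0 : (0 < n)%N by near: n; exact: nbhs_infty_ge.
have nC : 2 * C / e <= n%:R by near: n; exact: nbhs_infty_ger.
have nr : (0 < n%:R :> R) by rewrite ltr0n.
have lb : inf E <= n%:R^-1 * a n.
  apply: ge_inf => //; exists n.-1 => //; by rewrite prednK.
rewrite distrC ger0_norm ?subr_ge0 // lerBlDl.
have hr : ((n %% k.+1)%N < k.+1)%N by rewrite ltn_mod.
have hn : n = ((n %/ k.+1)%N * k.+1 + (n %% k.+1)%N)%N by rewrite -divn_eq.
move: hr hn; set q := (n %/ k.+1)%N; set r := (n %% k.+1)%N => hr hn.
have ar : a r <= C.
  rewrite /C (bigD1 (Ordinal hr)) //= lerDl sumr_ge0 //.
have qk : (q%:R * k.+1%:R <= n%:R :> R) by rewrite -natrM ler_nat hn leq_addr.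
have h1 : n%:R^-1 * a n <= (k.+1%:R)^-1 * a k.+1 + n%:R^-1 * C.
  rewrite {2}hn; have := subadd_iter a A q k.+1 r.
  move=> /(ler_wpM2l (_ : 0 <= n%:R^-1)); rewrite invr_ge0 ler0n => /(_ isT).
  rewrite -hn => /le_trans; apply; rewrite mulrDr lerD //; last first.
    by rewrite ler_wpM2l // invr_ge0.
  rewrite mulrA ler_wpM2r // mulrC ler_pdivrMr // ler_pdivlMl ?ltr0n //.
  by rewrite mulrC.
have h2 : n%:R^-1 * C <= e / 2.
  rewrite mulrC ler_pdivrMr //.
  rewrite ler_pdivrMr // in nC.
  rewrite mulrAC ler_pdivlMr //; rewrite mulrC; lra.
apply: (le_trans h1); apply: le_trans (lerD (ltW yl) h2) _.
by rewrite -addrA -splitr.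
Unshelve. all: end_near.
Qed.

End Fekete.

Section Part.
Context {d : measure_display} {T : measurableType d}.
Implicit Types (P Q S : set (set T)).

Lemma coarser_refl P : coarser P P.
Proof. by move=> A PA; exists A. Qed.

Lemma coarser_trans P Q S : coarser P Q -> coarser Q S -> coarser P S.
Proof.
move=> hPQ hQS C SC; have [B QB CB] := hQS C SC; have [A PA BA] := hPQ B QB.
by exists A => //; apply: subset_trans BA.
Qed.

Lemma coarser_pjoinl P Q : coarser P (pjoin P Q).
Proof. by move=> C [A [B [PA QB -> _]]]; exists A => //; apply: subIsetl. Qed.

Lemma coarser_pjoinr P Q : coarser Q (pjoin P Q).
Proof. by move=> C [A [B [PA QB -> _]]]; exists B => //; apply: subIsetr. Qed.

Lemma pjoin_univ P Q S : (forall C, S C -> C !=set0) ->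
  coarser P S -> coarser Q S -> coarser (pjoin P Q) S.
Proof.
move=> ne hP hQ C SC; have [A PA CA] := hP C SC; have [B QB CB] := hQ C SC.
have CAB : C `<=` A `&` B by move=> x Cx; split; [exact: CA | exact: CB].
exists (A `&` B) => //; exists A, B; split => //.
by have [x Cx] := ne C SC; exists x; apply: CAB.
Qed.

Lemma bigjoin_univ n (Q : nat -> set (set T)) S : (forall C, S C -> C !=set0) ->
  (forall i, (i < n)%N -> coarser (Q i) S) -> coarser (bigjoin n Q) S.
Proof.
move=> ne; elim: n => [|n IH] h /=; first by move=> C SC; exists setT.
apply: pjoin_univ => //; first by apply: IH => i lt; apply: h; apply: ltnW.
exact: h.
Qed.

Lemma bigjoin_comp n (Q : nat -> set (set T)) i : (i < n)%N ->
  coarser (Q i) (bigjoin n Q).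
Proof.
elim: n => [//|n IH]; rewrite ltnS leq_eqVlt => /orP[/eqP ->|lt] /=.
  exact: coarser_pjoinr.
exact: coarser_trans (IH lt) (coarser_pjoinl _ _).
Qed.

Lemma ppre_mono (g : T -> T) P Q : coarser P Q -> coarser (ppre g P) (ppre g Q).
Proof.
move=> h C [B [QB -> ne]]; have [A PA BA] := h B QB.
exists (g @^-1` A); last by move=> x; apply: BA.
exists A; split => //; have [x Bx] := ne; exists x; exact: BA.
Qed.

Lemma ppre_comp (g h : T -> T) P :
  coarser (ppre (fun x => g (h x)) P) (ppre h (ppre g P)).
Proof.
move=> C [D [[A [PA -> _]] -> ne]]; exists (h @^-1` (g @^-1` A)) => //.
by exists A; split.
Qed.

Lemma fm_ne P : is_fmpart P -> forall C, P C -> C !=set0.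
Proof. by case. Qed.

Lemma fm_cover P : is_fmpart P -> forall x, exists2 A, P A & A x.
Proof.
case=> _ _ _ _ cov x; have : [set: T] x by [].
by rewrite -cov => -[A PA Ax]; exists A.
Qed.

Lemma fm_disj P : is_fmpart P -> forall A B, P A -> P B -> A `&` B !=set0 -> A = B.
Proof. by case. Qed.

Lemma fm_meas P : is_fmpart P -> forall A, P A -> measurable A.
Proof. by case. Qed.

Lemma fm_fin P : is_fmpart P -> finite_set P.
Proof. by case. Qed.

Lemma fm_pjoin P Q : is_fmpart P -> is_fmpart Q -> is_fmpart (pjoin P Q).
Proof.
move=> fP fQ; split.
- apply: (@sub_finite_set _ _ ((fun p => p.1 `&` p.2) @` (P `*` Q))).
    by move=> C [A [B [PA QB -> _]]]; exists (A, B).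
  by apply: finite_image; apply: finite_setX; apply: fm_fin.
- by move=> C [A [B [PA QB -> _]]]; apply: measurableI; [exact: (fm_meas _ fP _ PA) | exact: (fm_meas _ fQ _ QB)].
- by move=> C [A [B [_ _ _ ne]]].
- move=> C1 C2 [A1 [B1 [PA1 QB1 -> _]]] [A2 [B2 [PA2 QB2 -> _]]] [x [[x1 y1] [x2 y2]]].
  have -> : A1 = A2 by apply: (fm_disj _ fP) => //; exists x.
  have -> : B1 = B2 by apply: (fm_disj _ fQ) => //; exists x.
  by [].
- apply/seteqP; split => // x _.
  have [A PA Ax] := fm_cover _ fP x; have [B QB Bx] := fm_cover _ fQ x.
  exists (A `&` B) => //; exists A, B; split => //; by exists x.
Qed.

Lemma fm_ppre (g : T -> T) P :
  (forall A, measurable A -> measurable (g @^-1` A)) ->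
  is_fmpart P -> is_fmpart (ppre g P).
Proof.
move=> mg fP; split.
- apply: (@sub_finite_set _ _ ((fun A => g @^-1` A) @` P)).
    by move=> C [A [PA -> _]]; exists A.
  by apply: finite_image; apply: fm_fin.
- by move=> C [A [PA -> _]]; apply: mg; exact: (fm_meas _ fP _ PA).
- by move=> C [A [_ _ ne]].
- move=> C1 C2 [A1 [PA1 -> _]] [A2 [PA2 -> _]] [x [x1 x2]].
  have -> : A1 = A2 by apply: (fm_disj _ fP) => //; exists (g x).
  by [].
- apply/seteqP; split => // x _.
  have [A PA Ax] := fm_cover _ fP (g x).
  exists (g @^-1` A) => //; exists A; split => //; by exists x.
Qed.

Lemma fm_setT : [set: T] !=set0 -> is_fmpart [set [set: T]].
Proof.
move=> ne; split.
- exact: finite_set1.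
- by move=> A ->.
- by move=> A ->.
- by move=> A B -> ->.
- by apply/seteqP; split => // x _; exists setT.
Qed.

Lemma fm_bigjoin n (Q : nat -> set (set T)) : [set: T] !=set0 ->
  (forall i, is_fmpart (Q i)) -> is_fmpart (bigjoin n Q).
Proof.
move=> ne fQ; elim: n => [|n IH] /=; first exact: fm_setT.
exact: fm_pjoin.
Qed.

Lemma coarser_pjoin_eq P Q : is_fmpart P -> is_fmpart Q -> coarser P Q ->
  pjoin P Q = Q.
Proof.
move=> fP fQ h; apply/seteqP; split.
  move=> C [A [B [PA QB -> ne]]]; have [A' PA' BA'] := h B QB.
  have AA' : A = A'.
    apply: (fm_disj _ fP) => //; have [x [Ax Bx]] := ne; exists x; split => //.
    exact: BA'.
  by rewrite AA' setIidr.
move=> B QB; have [A PA BA] := h B QB; exists A, B; split => //.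
  by rewrite setIidr.
exact: fm_ne _ fQ _ QB.
Qed.

Lemma coarser_card P Q cP : is_fmpart P -> is_fmpart Q -> coarser Q P ->
  P = [set` cP] -> exists c : seq (set T), (size c <= size cP)%N /\ Q = [set` c].
Proof.
move=> fP fQ h eP.
have : [set` cP] `<=` P by rewrite eP.
have key : forall cP', [set` cP'] `<=` P -> exists c : seq (set T),
    [/\ (size c <= size cP')%N, [set` c] `<=` Q &
        forall B, B \in cP' -> exists2 C, C \in c & B `<=` C].
  elim=> [|B cP' IH] sub.
    by exists [::]; split => // C.
  have [|c [sz sQ hc]] := IH.
    by move=> A /= Ac; apply: sub; rewrite /= in_cons Ac orbT.
  have PB : P B by apply: sub; rewrite /= in_cons eqxx.
  have [C QC BC] := h B PB.
  exists (C :: c); split => //=.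
  - by move=> D /=; rewrite in_cons => /orP[/eqP ->|Dc] //; apply: sQ.
  - move=> B'; rewrite in_cons => /orP[/eqP ->|B'c].
      by exists C => //; rewrite in_cons eqxx.
    by have [C' C'c BC'] := hc B' B'c; exists C' => //; rewrite in_cons C'c orbT.
move=> sub; have [c [sz sQ hc]] := key cP sub.
exists c; split => //; apply/seteqP; split => // C QC.
have [x Cx] := fm_ne _ fQ _ QC; have [B PB Bx] := fm_cover _ fP x.
have Bc : B \in cP by move: PB; rewrite eP.
have [C' C'c BC'] := hc B Bc.
suff -> : C = C' by [].
apply: (fm_disj _ fQ) => //; first exact: sQ.
by exists x; split => //; apply: BC'.
Qed.

End Part.

Section Meas.
Context {d : measure_display} {T : measurableType d} {R : realType}.
Variable mu : probability T R.
Implicit Types (P Q : set (set T)).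

Lemma mu_fin A : measurable A -> mu A = (fine (mu A))%:E.
Proof. by move=> mA; rewrite fineK // fin_num_measure. Qed.

Lemma m_ge0 A : 0 <= fine (mu A).
Proof. exact: fine_ge0. Qed.

Lemma m_le1 A : measurable A -> fine (mu A) <= 1.
Proof.
move=> mA; have := probability_le1 mu mA; rewrite mu_fin // lee_fin.
Qed.

Lemma m_sum A Q : measurable A -> is_fmpart Q ->
  fine (mu A) = \sum_(B \in Q) fine (mu (A `&` B)).
Proof.
move=> mA fQ.
have eA : A = \bigcup_(B in Q) (A `&` B).
  rewrite -setI_bigcupr; case: fQ => _ _ _ _ ->; by rewrite setIT.
rewrite [in LHS]eA measure_fin_bigcup //; last first.
- by move=> B QB; apply: measurableI => //; exact: (fm_meas _ fQ).
- move=> B1 B2 QB1 QB2 [x [[_ x1] [_ x2]]].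
  by apply: (fm_disj _ fQ) => //; exists x.
- exact: (fm_fin _ fQ).
rewrite (eq_fsbigr (fun B => (fine (mu (A `&` B)))%:E)); last first.
  move=> B; rewrite inE => QB; apply: mu_fin; apply: measurableI => //.
  exact: (fm_meas _ fQ).
by rewrite fsumEFin //; exact: (fm_fin _ fQ).
Qed.

Lemma m_total Q : is_fmpart Q -> \sum_(B \in Q) fine (mu B) = 1.
Proof.
move=> fQ; have := m_sum setT Q measurableT fQ; rewrite probability_setT /=.
by under eq_fsbigr do rewrite setTI.
Qed.

Lemma H_ge0 P : is_fmpart P -> 0 <= pentropy mu P.
Proof.
move=> fP; apply: fsumr_ge0 => A PA; apply: (phi_ge0 _ (fine (mu A))).
by rewrite m_ge0 m_le1 //; exact: (fm_meas _ fP).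
Qed.


Lemma phi_m0 (A : set T) : A = set0 -> phi _ (fine (mu A)) = 0.
Proof. by move=> ->; rewrite measure0 /= phi0. Qed.

Lemma notne0 (A : set T) : ~ (A !=set0) -> A = set0.
Proof. by move=> h; apply/seteqP; split => // x Ax; apply: h; exists x. Qed.

Lemma H_pjoin P Q : is_fmpart P -> is_fmpart Q ->
  pentropy mu (pjoin P Q) =
  \sum_(A \in P) \sum_(B \in Q) phi _ (fine (mu (A `&` B))).
Proof.
move=> fP fQ.
pose D := [set p : set T * set T | (P `*` Q) p /\ p.1 `&` p.2 !=set0].
have eJ : pjoin P Q = (fun p => p.1 `&` p.2) @` D.
  apply/seteqP; split.
    by move=> C [A [B [PA QB -> ne]]]; exists (A, B).
  by move=> C [[A B] [[PA QB] ne] <-]; exists A, B.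
rewrite /pentropy eJ fsbig_image /=; last first.
  move=> [A1 B1] [A2 B2]; rewrite !inE => -[[PA1 QB1] ne1] [[PA2 QB2] ne2] /= e.
  have [x [x1 x2]] := ne1.
  have x3 : (A2 `&` B2) x by rewrite -e.
  case: x3 => y1 y2.
  have -> : A1 = A2 by apply: (fm_disj _ fP) => //; exists x.
  have -> : B1 = B2 by apply: (fm_disj _ fQ) => //; exists x.
  by [].
rewrite pair_fsbig; [|exact: (fm_fin _ fP)|exact: (fm_fin _ fQ)].
apply: (fsbig_widen D (P `*` Q)); first by move=> p [].
move=> [A B] [PQ nD] /=; rewrite /preimage /=.
apply: phi_m0; apply: notne0 => ne; apply: nD; split => //.
Qed.

Lemma H_ppre (g : T -> T) P :
  (forall A, measurable A -> measurable (g @^-1` A) /\ mu (g @^-1` A) = mu A) ->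
  is_fmpart P -> pentropy mu (ppre g P) = pentropy mu P.
Proof.
move=> hg fP.
pose D := [set A | P A /\ g @^-1` A !=set0].
have eJ : ppre g P = (fun A => g @^-1` A) @` D.
  apply/seteqP; split.
    by move=> C [A [PA -> ne]]; exists A.
  by move=> C [A [PA ne] <-]; exists A.
rewrite /pentropy eJ fsbig_image /=; last first.
  move=> A1 A2; rewrite !inE => -[PA1 ne1] [PA2 ne2] /= e.
  have [x x1] := ne1.
  have x2 : (g @^-1` A2) x by rewrite -e.
  by apply: (fm_disj _ fP) => //; exists (g x).
rewrite (eq_fsbigr (fun A => phi _ (fine (mu A)))); last first.
  move=> A; rewrite inE => -[PA _].
  by rewrite (hg A _).2 //; exact: (fm_meas _ fP).
apply: (@fsbig_widen _ _ _ _ D P (fun A => phi R (fine (mu A)))).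
  by move=> A [].
move=> A [PA nD] /=; rewrite /preimage /=.
have e0 : g @^-1` A = set0 by apply: notne0 => ne; apply: nD.
rewrite -(hg A _).2; last exact: (fm_meas _ fP).
by apply: phi_m0.
Qed.


Lemma ler_fsum (I : choiceType) (S : set I) (F G : I -> R) : finite_set S ->
  (forall i, S i -> F i <= G i) -> \sum_(i \in S) F i <= \sum_(i \in S) G i.
Proof.
move=> fS h; rewrite !fsbig_finite // big_seq [X in _ <= X]big_seq.
by apply: ler_sum => i; rewrite in_fset_set // inE; exact: h.
Qed.

Lemma ent_sub_fs (I J : choiceType) (S1 : set I) (S2 : set J) (p : I -> J -> R) :
  finite_set S1 -> finite_set S2 ->
  (forall i j, S1 i -> S2 j -> 0 <= p i j) ->
  \sum_(i \in S1) \sum_(j \in S2) p i j = 1 ->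
  \sum_(i \in S1) \sum_(j \in S2) phi R (p i j) <=
  \sum_(i \in S1) phi R (\sum_(j \in S2) p i j) +
  \sum_(j \in S2) phi R (\sum_(i \in S1) p i j).
Proof.
move=> f1 f2 p0 p1.
rewrite !(fsbig_finite _ _ f1) !(fsbig_finite _ _ f2).
under eq_bigr do rewrite (fsbig_finite _ _ f2).
under [X in _ <= X + _]eq_bigr do rewrite (fsbig_finite _ _ f2).
under [X in _ <= _ + X]eq_bigr do rewrite (fsbig_finite _ _ f1).
apply: ent_sub_seq; last first.
  rewrite -p1 (fsbig_finite _ _ f1); apply: eq_bigr => i _.
  by rewrite (fsbig_finite _ _ f2).
move=> i j.
rewrite !in_fset_set // !inE; exact: p0.
Qed.

Lemma H_mono P Q : is_fmpart P -> is_fmpart Q ->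
  pentropy mu P <= pentropy mu (pjoin P Q).
Proof.
move=> fP fQ; rewrite H_pjoin //; apply: ler_fsum; first exact: (fm_fin _ fP).
move=> A PA /=; rewrite -[X in X <= _]/(phi R (fine (mu A))).
rewrite (m_sum A Q) //; last exact: (fm_meas _ fP).
rewrite !(fsbig_finite _ _ (fm_fin _ fQ)).
by apply: sum_phi_le => B _; exact: m_ge0.
Qed.

Lemma H_coarser P Q : is_fmpart P -> is_fmpart Q -> coarser P Q ->
  pentropy mu P <= pentropy mu Q.
Proof.
by move=> fP fQ h; rewrite -(coarser_pjoin_eq P Q fP fQ h); apply: H_mono.
Qed.

Lemma H_join_le P Q : is_fmpart P -> is_fmpart Q ->
  pentropy mu (pjoin P Q) <= pentropy mu P + pentropy mu Q.
Proof.
move=> fP fQ; rewrite H_pjoin //.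
have eP : pentropy mu P =
    \sum_(A \in P) phi R (\sum_(B \in Q) fine (mu (A `&` B))).
  apply: eq_fsbigr => A; rewrite inE => PA.
  by rewrite -m_sum //; exact: (fm_meas _ fP).
have eQ : pentropy mu Q =
    \sum_(B \in Q) phi R (\sum_(A \in P) fine (mu (A `&` B))).
  apply: eq_fsbigr => B; rewrite inE => QB.
  under eq_fsbigr do rewrite setIC.
  by rewrite -m_sum //; exact: (fm_meas _ fQ).
rewrite eP eQ; apply: ent_sub_fs; [exact: (fm_fin _ fP)|exact: (fm_fin _ fQ)| |].
  by move=> A B _ _; exact: m_ge0.
rewrite -(m_total _ fP); apply: eq_fsbigr => A; rewrite inE => PA.
by rewrite -m_sum //; exact: (fm_meas _ fP).
Qed.

End Meas.

Section Dyn.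
Context {d : measure_display} {T : measurableType d} {R : realType}.
Variable mu : probability T R.
Variable f : T -> T.
Hypothesis mf : measurable_fun setT f.
Hypothesis finv : forall A : set T, measurable A -> mu (f @^-1` A) = mu A.
Implicit Types (P Q : set (set T)).

Lemma hit i A : measurable A ->
  measurable (iter i f @^-1` A) /\ mu (iter i f @^-1` A) = mu A.
Proof.
elim: i A => [|i IH] A mA //=.
have mfA : measurable (f @^-1` A).
  by have := mf measurableT A mA; rewrite setTI.
have [h1 h2] := IH _ mfA.
by split; [exact: h1| rewrite h2 finv].
Qed.

Lemma Tne : [set: T] !=set0.
Proof.
apply: contrapT => h; have e : [set: T] = set0 by apply: notne0.
have := probability_setT mu; rewrite e measure0 => /eqP.
by rewrite eqe eq_sym oner_eq0.
Qed.

Definition Pn P n := bigjoin n (fun i => ppre (iter i f) P).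

Lemma fm_ppre_it i P : is_fmpart P -> is_fmpart (ppre (iter i f) P).
Proof. by apply: fm_ppre => A mA; case: (hit i A mA). Qed.

Lemma fm_Pn P n : is_fmpart P -> is_fmpart (Pn P n).
Proof. by move=> fP; apply: fm_bigjoin; [exact: Tne| move=> i; exact: fm_ppre_it]. Qed.

Lemma Pn_split P m n : is_fmpart P ->
  coarser (Pn P (m + n)) (pjoin (Pn P m) (ppre (iter m f) (Pn P n))).
Proof.
move=> fP; apply: bigjoin_univ.
  apply: fm_ne; apply: fm_pjoin; first exact: fm_Pn.
  by apply: fm_ppre; [move=> A mA; case: (hit m A mA)| exact: fm_Pn].
move=> i lt; have [im|mi] := ltnP i m.
  apply: (coarser_trans _ (Pn P m)); [exact: bigjoin_comp | exact: coarser_pjoinl].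
have ei : i = (m + (i - m))%N by rewrite subnKC.
have ltj : (i - m < n)%N by rewrite ltn_subLR.
have eit : iter i f = (fun x => iter (i - m) f (iter m f x)).
  by apply: funext => x; rewrite -iterD addnC -ei.
rewrite eit; apply: (coarser_trans _ (ppre (iter m f) (ppre (iter (i - m) f) P))).
  exact: ppre_comp.
apply: (coarser_trans _ (ppre (iter m f) (Pn P n))); last exact: coarser_pjoinr.
apply: ppre_mono; exact: bigjoin_comp.
Qed.

Lemma a_sub P m n : is_fmpart P ->
  pentropy mu (Pn P (m + n)) <= pentropy mu (Pn P m) + pentropy mu (Pn P n).
Proof.
move=> fP.
have fJ : is_fmpart (ppre (iter m f) (Pn P n)).
  by apply: fm_ppre; [move=> A mA; case: (hit m A mA)| exact: fm_Pn].
apply: le_trans (H_coarser _ _ _ (fm_Pn P (m + n) fP) (fm_pjoin _ _ (fm_Pn P m fP) fJ)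
  (Pn_split P m n fP)) _.
apply: le_trans (H_join_le _ _ _ (fm_Pn P m fP) fJ) _.
rewrite H_ppre //; last exact: fm_Pn.
by move=> A mA; apply: hit.
Qed.

Lemma cvg_Pn P : is_fmpart P -> cvgn (fun n => (n%:R)^-1 * pentropy mu (Pn P n)).
Proof.
move=> fP; apply: fekete; first by move=> n; apply: H_ge0; exact: fm_Pn.
by move=> m n; apply: a_sub.
Qed.

Lemma ks_eq P : is_fmpart P ->
  seq_entropy mu f (fun _ => P) = ks_entropy_part mu f P.
Proof.
move=> fP; rewrite /seq_entropy /ks_entropy_part is_cvg_limn_esupE //.
have := cvg_Pn P fP => /cvg_ex [l hl].
apply/cvg_ex; exists l%:E; apply: cvg_EFin; first exact: nearW.
exact: hl.
Qed.


Definition E0 : set (nat -> set (set T)) :=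
  [set s | is_fmpart_seq s /\ exists2 P, is_fmpart P & forall n, coarser (s n) P].

Lemma coarser_join_seq (s : nat -> set (set T)) P n :
  is_fmpart P -> (forall i, coarser (s i) P) ->
  coarser (bigjoin n (fun i => ppre (iter i f) (s i))) (Pn P n).
Proof.
move=> fP h; apply: bigjoin_univ; first exact: fm_ne (fm_Pn P n fP).
move=> i lt; apply: (coarser_trans _ (ppre (iter i f) P)).
  exact: ppre_mono.
exact: (bigjoin_comp n (fun i => ppre (iter i f) P)).
Qed.

Lemma E0_adm : admissible f E0.
Proof.
split.
- exists (fun _ => [set [set: T]]); split; first by move=> n; exact: fm_setT Tne.
  by exists [set [set: T]]; [exact: fm_setT Tne| move=> n; exact: coarser_refl].
- by move=> s [].
- move=> s [fs [P fP h]].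
  have [cP eP] := (finite_seqP _).1 (fm_fin _ fP).
  exists (size cP) => n; have [c [sz ec]] := coarser_card P (s n) cP fP (fs n) (h n) eP.
  by exists c.
- move=> s t [fs [P fP h]] ft hts; split => //; exists P => // n.
  exact: coarser_trans (hts n) (h n).
- move=> s m [fs [P fP h]] m1; split.
    move=> k; apply: fm_bigjoin; first exact: Tne.
    move=> i; apply: fm_ppre_it; exact: fs.
  exists (Pn P m); first exact: fm_Pn.
  move=> k; apply: bigjoin_univ; first exact: fm_ne (fm_Pn P m fP).
  move=> i lt; apply: (coarser_trans _ (ppre (iter i f) P)).
    exact: ppre_mono.
  exact: (bigjoin_comp m (fun i => ppre (iter i f) P)).
Qed.

Lemma le_limn_esup (u v : nat -> \bar R) : (forall n, (u n <= v n)%E) ->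
  (limn_esup u <= limn_esup v)%E.
Proof.
move=> h; rewrite !limn_esup_lim; apply: lee_lim; [exact: is_cvg_esups|exact: is_cvg_esups|].
apply: nearW => n; apply: ub_ereal_sup => _ [k nk <-].
apply: le_trans (h k) _; apply: ereal_sup_ubound; by exists k.
Qed.

Lemma E0_bound s : E0 s -> exists2 P, is_fmpart P &
  (seq_entropy mu f s <= ks_entropy_part mu f P)%E.
Proof.
move=> [fs [P fP h]]; exists P => //; rewrite -ks_eq //.
apply: le_limn_esup => n; rewrite lee_fin; apply: ler_wpM2l.
  by rewrite invr_ge0.
apply: H_coarser; [apply: fm_bigjoin; [exact: Tne| move=> i; apply: fm_ppre_it; exact: fs]
  | exact: fm_Pn | exact: coarser_join_seq].
Qed.

Lemma main_eq :
  class_entropy mu f (gen_class f (@const_fmpart_seqs d T)) = ks_entropy mu f.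
Proof.
apply/eqP; rewrite eq_le; apply/andP; split.
  apply: ub_ereal_sup => _ [s Es <-].
  have E0s : E0 s by apply: Es; [exact: E0_adm | move=> t [P fP ->]; split;
    [move=> n; exact: fP | exists P => // n; exact: coarser_refl]].
  have [P fP le] := E0_bound s E0s; apply: le_trans le _.
  by apply: ereal_sup_ubound; exists P.
apply: ub_ereal_sup => _ [P fP <-]; rewrite -ks_eq //.
apply: ereal_sup_ubound; exists (fun _ => P) => //.
by move=> E _ FE; apply: FE; exists P.
Qed.

End Dyn.


Theorem mainTheorem12 (d : measure_display) (T : measurableType d)
  (R : realType) (mu : probability T R) (f : T -> T)
  (mf : measurable_fun setT f)
  (finv : forall A : set T, measurable A -> mu (f @^-1` A) = mu A) :
  class_entropy mu f (gen_class f (@const_fmpart_seqs d T)) =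
  ks_entropy mu f.
Proof.
exact: (main_eq mu f mf finv).
Qed.
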